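(* Let $v\ge1$. If there exists an OA$(2,4,v)$, then there exists a $(2,3,v)$-AONT.
   Context: An orthogonal array OA$(t,k,v)$ over an alphabet $X$ with $|X|=v$ is a $v^t\times k$ array with entries in $X$ such that for every set of $t$ columns, every $t$-tuple of elements of $X$ occurs exactly once as a row of the subarray formed by these columns. Let $0\le t\le s$. A $(t,s,v)$-AONT is a bijection $\phi:X^s\to X^s$ such that for every $I\subseteq\{1,\dots,s\}$ with $|I|=t$ and every $J\subseteq\{1,\dots,s\}$ with $|J|=s-t$, the map $x\mapsto\big((x_i)_{i\in I},(\phi(x)_j)_{j\in J}\big)$ is a bijection $X^s\to X^t\times X^{s-t}$. *)

(* Defs.v *)
From mathcomp Require Import all_boot.
Set Implicit Arguments. Unset Strict Implicit. Unset Printing Implicit Defensive.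

(* An OA(t,k,v) over alphabet X (|X| = v): a v^t x k array A, rows indexed by
   'I_(v^t), such that for every set C of t columns and every t-tuple of
   symbols (given as a function on the columns, only its values on C matter)
   there is exactly one row agreeing with it on C. *)
Definition is_OA (X : finType) (t k : nat) (A : 'I_(#|X| ^ t) -> 'I_k -> X) : Prop :=
  forall (C : {set 'I_k}), #|C| = t ->
  forall (f : 'I_k -> X),
    exists! r : 'I_(#|X| ^ t), forall c, c \in C -> A r c = f c.

(* A (t,s,v)-AONT over X: a bijection phi : X^s -> X^s such that for all
   I, J with |I| = t, |J| = s - t, x |-> (x|_I, phi(x)|_J) is a bijection
   X^s -> X^t x X^(s-t): every prescribed pair of values (a on I, b on J)
   is attained by exactly one x. *)
Definition is_AONT (X : finType) (t s : nat)
    (phi : {ffun 'I_s -> X} -> {ffun 'I_s -> X}) : Prop :=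
  bijective phi /\
  forall (I J : {set 'I_s}), #|I| = t -> #|J| = s - t ->
  forall (a b : 'I_s -> X),
    exists! x : {ffun 'I_s -> X},
      (forall i, i \in I -> x i = a i) /\ (forall j, j \in J -> phi x j = b j).

(* Main.v *)
Require Import Defs.
From mathcomp Require Import all_boot.
Set Implicit Arguments. Unset Strict Implicit. Unset Printing Implicit Defensive.

Definition c0 : 'I_4 := @Ordinal 4 0 isT.
Definition c1 : 'I_4 := @Ordinal 4 1 isT.
Definition c2 : 'I_4 := @Ordinal 4 2 isT.
Definition c3 : 'I_4 := @Ordinal 4 3 isT.

Lemma row_eq (X : finType) (A : 'I_(#|X| ^ 2) -> 'I_4 -> X) (hA : is_OA A)
  c c' r r' : c != c' -> A r c = A r' c -> A r c' = A r' c' -> r = r'.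
Proof.
move=> ne e1 e2.
have hC : #|[set c; c']| = 2 by rewrite cards2 ne.
have [r0 [_ u]] := hA [set c; c'] hC (A r).
rewrite -(u r); last by move=> x /set2P [->|->].
apply: u => x /set2P [->|->] //.
Qed.

Lemma row_ex (X : finType) (A : 'I_(#|X| ^ 2) -> 'I_4 -> X) (hA : is_OA A) a b :
  exists r, A r c0 = a /\ A r c1 = b.
Proof.
have hC : #|[set c0; c1]| = 2 by rewrite cards2.
have [r [h _]] := hA [set c0; c1] hC (fun c => if c == c0 then a else b).
by exists r; split; [rewrite h ?set21 | rewrite h ?set22].
Qed.

Definition Sq (X : finType) (A : 'I_(#|X| ^ 2) -> 'I_4 -> X) (c : 'I_4) (a b : X) : X :=
  if [pick r | (A r c0 == a) && (A r c1 == b)] is Some r then A r c else a.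

Lemma SqE (X : finType) (A : 'I_(#|X| ^ 2) -> 'I_4 -> X) (hA : is_OA A) c r :
  Sq A c (A r c0) (A r c1) = A r c.
Proof.
rewrite /Sq; case: pickP => [r' /andP [/eqP h0 /eqP h1]|H].
  by rewrite (row_eq hA _ h0 h1).
by have := H r; rewrite !eqxx.
Qed.

Lemma Sq_gen (X : finType) (A : 'I_(#|X| ^ 2) -> 'I_4 -> X) (hA : is_OA A) a b :
  exists r, [/\ a = A r c0, b = A r c1, Sq A c2 a b = A r c2 & Sq A c3 a b = A r c3].
Proof.
have [r [<- <-]] := row_ex hA a b.
by exists r; rewrite !(SqE hA).
Qed.

Lemma Sq_injl (X : finType) (A : 'I_(#|X| ^ 2) -> 'I_4 -> X) (hA : is_OA A) c b a a' : (c == c2) || (c == c3) ->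
  Sq A c a b = Sq A c a' b -> a = a'.
Proof.
move=> hc.
have [r [-> -> _ _]] := Sq_gen hA a b.
have [r' [-> e _ _]] := Sq_gen hA a' (A r c1).
rewrite {2}e !(SqE hA) => h.
suff -> : r = r' by [].
have ne : c1 != c by case/orP: hc => /eqP ->.
exact: (row_eq hA ne e h).
Qed.

Lemma Sq_injr (X : finType) (A : 'I_(#|X| ^ 2) -> 'I_4 -> X) (hA : is_OA A) c a b b' : (c == c2) || (c == c3) ->
  Sq A c a b = Sq A c a b' -> b = b'.
Proof.
move=> hc.
have [r [-> -> _ _]] := Sq_gen hA a b.
have [r' [e -> _ _]] := Sq_gen hA (A r c0) b'.
rewrite {2}e !(SqE hA) => h.
suff -> : r = r' by [].
have ne : c0 != c by case/orP: hc => /eqP ->.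
exact: (row_eq hA ne e h).
Qed.

Lemma Sq_orth (X : finType) (A : 'I_(#|X| ^ 2) -> 'I_4 -> X) (hA : is_OA A) a b a' b' :
  Sq A c2 a b = Sq A c2 a' b' -> Sq A c3 a b = Sq A c3 a' b' -> a = a' /\ b = b'.
Proof.
have [r [-> -> e2 e3]] := Sq_gen hA a b.
have [r' [-> -> e2' e3']] := Sq_gen hA a' b'.
rewrite e2 e3 e2' e3' => h2 h3.
by rewrite (row_eq hA (isT : c2 != c3) h2 h3).
Qed.

Definition i0 : 'I_3 := @Ordinal 3 0 isT.
Definition i1 : 'I_3 := @Ordinal 3 1 isT.
Definition i2 : 'I_3 := @Ordinal 3 2 isT.

Definition phiA (X : finType) (A : 'I_(#|X| ^ 2) -> 'I_4 -> X) (x : {ffun 'I_3 -> X})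
  : {ffun 'I_3 -> X} :=
  [ffun i : 'I_3 => if val i == 0 then Sq A c2 (x i1) (Sq A c2 (x i0) (x i2))
    else if val i == 1 then Sq A c3 (x i1) (Sq A c2 (x i0) (x i2))
    else Sq A c2 (x i1) (Sq A c3 (x i0) (x i2))].

Definition upd (X : finType) (x : {ffun 'I_3 -> X}) (k : 'I_3) (z : X) : {ffun 'I_3 -> X} :=
  [ffun i => if i == k then z else x i].

Lemma phiA_latin (X : finType) (A : 'I_(#|X| ^ 2) -> 'I_4 -> X) (hA : is_OA A) j k x :
  injective (fun z => phiA A (upd x k z) j).
Proof.
have L2l := @Sq_injl X A hA c2 _ _ _ isT.
have L2r := @Sq_injr X A hA c2 _ _ _ isT.
have L3l := @Sq_injl X A hA c3 _ _ _ isT.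
have L3r := @Sq_injr X A hA c3 _ _ _ isT.
move=> z z'; rewrite /phiA /upd !ffunE.
case: j => [[|[|[|//]]] ?]; case: k => [[|[|[|//]]] ?] /=; rewrite ?ffunE /=.
all: by move=> h; repeat (first [ move/L2l: h => h | move/L2r: h => h | move/L3l: h => h | move/L3r: h => h]).
Qed.

Lemma phiA_inj (X : finType) (A : 'I_(#|X| ^ 2) -> 'I_4 -> X) (hA : is_OA A) :
  injective (phiA A).
Proof.
move=> x y /ffunP h.
have h0 := h i0; have h1 := h i1; have h2 := h i2.
rewrite !ffunE /= in h0 h1 h2.
have [e1 e] := Sq_orth hA h0 h1.
rewrite e1 in h2; move/(@Sq_injr X A hA c2 _ _ _ isT): h2 => e'.
have [e0 e2] := Sq_orth hA e e'.
apply/ffunP => -[[|[|[|//]]] p].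
- by rewrite (_ : Ordinal p = i0) // ; apply: val_inj.
- by rewrite (_ : Ordinal p = i1) // ; apply: val_inj.
- by rewrite (_ : Ordinal p = i2) // ; apply: val_inj.
Qed.

Theorem theorem3p7 (v : nat) (X : finType) :
  1 <= v -> #|X| = v ->
  (exists A : 'I_(#|X| ^ 2) -> 'I_4 -> X, is_OA A) ->
  exists phi : {ffun 'I_3 -> X} -> {ffun 'I_3 -> X}, is_AONT 2 phi.
Proof.
move=> _ _ [A hA]; exists (phiA A); split; first exact: injF_bij (phiA_inj hA).
move=> I J hI hJ a b.
have : #|~: I| = 1 by rewrite cardsCs setCK card_ord hI.
move/eqP/cards1P => -[k hk].
have : #|J| = 1 by rewrite hJ.
move/eqP/cards1P => -[j ->].
have inI i : (i \in I) = (i != k).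
  by rewrite -[I]setCK hk !inE.
set a' := [ffun i => a i].
have [g gK Kg] := injF_bij (@phiA_latin X A hA j k a').
exists (upd a' k (g (b j))); split.
  split.
    by move=> i; rewrite inI /upd ffunE => /negbTE ->; rewrite ffunE.
  by move=> j' /set1P ->; rewrite Kg.
move=> y [hy hy'].
have ey : y = upd a' k (y k).
  apply/ffunP => i; rewrite /upd !ffunE.
  by case: eqP => [->|/eqP ne] //; rewrite hy // inI.
have := hy' j (set11 j); rewrite ey => hb.
by rewrite -hb gK.
Qed.
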